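(* There exist constants $c>0$ and $K>0$ such that for every positive integer $n$ there exists a divisor $m$ of $n$ with $m\ge n^{c/\log\log\log n}$ and $\sigma(m)\le K m$.
   Context: $\sigma(m)$ is the sum of the positive divisors of $m$. Convention: $\log x$ denotes $\max(\ln x,1)$. *)

(* Defs.v *)
From Stdlib Require Import Reals Arith List.
Import ListNotations.
Open Scope R_scope.

(* sigma m = sum of the positive divisors of m (sigma 0 = 0 by convention). *)
Definition sigma_div (m : nat) : nat :=
  fold_right Nat.add 0%nat
    (filter (fun d => Nat.eqb (Nat.modulo m d) 0) (seq 1 m)).

(* Paper convention: log x denotes max(ln x, 1). *)
Definition plog (x : R) : R := Rmax (ln x) 1.

(* Main.v *)
Require Import Defs.
From Stdlib Require Import Reals Arith List Lra Lia ZArith.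
From mathcomp Require Import all_boot all_order all_algebra.
From mathcomp Require Import Rstruct.
From mathcomp Require Import zify.
Set Implicit Arguments. Unset Strict Implicit. Unset Printing Implicit Defensive.
Close Scope R_scope.


Definition sigmaN (m : nat) : nat := \sum_(d < m.+1 | d %| m) d.

Lemma sum_inj_le (I J : finType) (A : {pred I}) (B : {pred J}) (h : I -> J)
  (F : J -> nat) :
  {in A &, injective h} -> (forall i, i \in A -> h i \in B) ->
  \sum_(i in A) F (h i) <= \sum_(j in B) F j.
Proof.
move=> inj hAB; rewrite -(big_imset _ inj).
rewrite (bigID (fun j => j \in [set h x | x in A]) (fun j => j \in B)) /=.
apply: leq_trans (leq_addr _ _).
rewrite [X in _ <= X](eq_bigl (fun j => j \in [set h x | x in A])) //.
move=> j; apply/andP/idP => [[]//|jin]; split=> //.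
by case/imsetP: jin => i iA ->; apply: hAB.
Qed.

Lemma gcd_coprime_split a b d : coprime a b -> d %| a * b ->
  d = gcdn d a * gcdn d b.
Proof.
move=> cab dab.
apply/eqP; rewrite eqn_dvd; apply/andP; split.
  have h1 : d %| gcdn d a * b.
    by rewrite muln_gcdl dvdn_gcd dvdn_mulr.
  have : d %| gcdn (gcdn d a * b) (gcdn d a * d).
    by rewrite dvdn_gcd h1 dvdn_mull.
  by rewrite -muln_gcdr [gcdn b d]gcdnC.
have cg : coprime (gcdn d a) (gcdn d b).
  apply: (coprime_dvdl (dvdn_gcdr d a)).
  exact: (coprime_dvdr (dvdn_gcdr d b)).
by rewrite Gauss_dvd // dvdn_gcdl dvdn_gcdl.
Qed.

Lemma sigM a b : 0 < a -> 0 < b -> coprime a b -> sigmaN (a * b) <= sigmaN a * sigmaN b.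
Proof.
move=> a0 b0 cab.
rewrite /sigmaN big_distrl /=.
rewrite (eq_bigr (fun e : 'I_a.+1 => \sum_(f < b.+1 | f %| b) e * f)); last first.
  by move=> e _; rewrite big_distrr.
rewrite pair_big /=.
pose h (d : 'I_(a * b).+1) : 'I_a.+1 * 'I_b.+1 := (inord (gcdn d a), inord (gcdn d b)).
have hv : forall d : 'I_(a*b).+1, d %| a * b ->
   ((h d).1 : nat) = gcdn d a /\ ((h d).2 : nat) = gcdn d b.
  move=> d _; rewrite /h /= !inordK //; rewrite ltnS; apply: dvdn_leq => //;
    apply: dvdn_gcdr.
have key : forall d : 'I_(a*b).+1, d %| a * b -> (d : nat) = (h d).1 * (h d).2.
  by move=> d dd; have [-> ->] := hv d dd; apply: gcd_coprime_split.
rewrite (eq_bigr (fun d : 'I_(a*b).+1 => (fun x : 'I_a.+1 * 'I_b.+1 => (x.1 : nat) * x.2) (h d))); last first.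
  by move=> d dd; rewrite -key.
apply: (sum_inj_le (A := [pred d : 'I_(a*b).+1 | d %| a * b])
  (B := [pred x : 'I_a.+1 * 'I_b.+1 | (x.1 %| a) && (x.2 %| b)])).
  move=> d1 d2; rewrite !inE => d1d d2d eqh; apply: val_inj => /=.
  by rewrite (key _ d1d) (key _ d2d) eqh.
move=> d; rewrite !inE => dd; have [-> ->] := hv d dd.
by rewrite !dvdn_gcdr.
Qed.

Lemma sig_pexp p k : prime p -> sigmaN (p ^ k) * p.-1 < p ^ k.+1.
Proof.
move=> pp; have p0 := prime_gt0 pp.
have le : sigmaN (p ^ k) <= \sum_(i < k.+1) p ^ i.
  rewrite /sigmaN.
  pose h (d : 'I_(p ^ k).+1) : 'I_k.+1 := inord (logn p d).
  have hv : forall d : 'I_(p^k).+1, d %| p ^ k -> (d : nat) = p ^ (h d).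
    move=> d /(dvdn_pfactor _ _ pp) [m mk dE].
    by rewrite /h dE pfactorK // inordK.
  rewrite (eq_bigr (fun d => (fun i : 'I_k.+1 => p ^ i) (h d))); last first.
    by move=> d dd; rewrite -hv.
  apply: (sum_inj_le (A := [pred d : 'I_(p^k).+1 | d %| p ^ k]) (B := predT)) => //.
  move=> d1 d2; rewrite !inE => d1d d2d eqh; apply: val_inj => /=.
  by rewrite (hv _ d1d) (hv _ d2d) eqh.
apply: (@leq_ltn_trans ((\sum_(i < k.+1) p ^ i) * p.-1)).
  exact: leq_mul.
rewrite mulnC -predn_exp.
have : 0 < p ^ k.+1 by rewrite expn_gt0 p0.
by case: (p ^ k.+1).
Qed.


Lemma big_recr_cond (R : Type) (idx : R) (op : Monoid.law idx) (P : pred nat)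
  (F : nat -> R) b :
  \big[op/idx]_(0 <= i < b.+1 | P i) F i =
  op (\big[op/idx]_(0 <= i < b | P i) F i) (if P b then F b else idx).
Proof. by rewrite big_mkcond big_nat_recr //= -big_mkcond. Qed.

Lemma logn_gt0_prime p n : 0 < logn p n -> prime p /\ p %| n.
Proof. by rewrite logn_gt0 mem_primes => /and3P[]. Qed.

Section PartBound.
Variables (n : nat) (pi : nat_pred).
Definition qq p := (p \in pi) && (0 < logn p n).
Definition Mpart b := \prod_(0 <= p < b | p \in pi) p ^ logn p n.
Local Notation q := qq.

Lemma M_gt0 b : 0 < Mpart b.
Proof. apply: prodn_gt0 => p; rewrite expn_gt0; case: p => //= _; by case: (logn 0 n). Qed.

Lemma part_bound b :
  sigmaN (Mpart b) * \prod_(0 <= p < b | q p) p.-1 <= Mpart b * \prod_(0 <= p < b | q p) p.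
Proof.
elim: b => [|b IH].
  by rewrite /Mpart !big_geq //= /sigmaN big_mkcond (big_ord_recr 1) big_ord_recr big_ord0.
rewrite /Mpart !big_recr_cond -/(Mpart b).
case qb: (q b); last first.
  case pb: (b \in pi); last by rewrite /= !muln1.
  move: qb; rewrite /qq pb /= => /negbT; rewrite -leqNgt leqn0 => /eqP ->.
  by rewrite expn0 !muln1.
have /andP[pb eb] : (b \in pi) && (0 < logn b n) := qb. rewrite pb.
have [pr _] := logn_gt0_prime eb.
set e := logn b n.
have cop : coprime (Mpart b) (b ^ e).
  rewrite coprime_pexpr // coprime_sym prime_coprime // Euclid_dvd_prod //.
  rewrite big_seq_cond big1_idem // => i /andP[ipi _].
  rewrite Euclid_dvdX //; apply/negbTE; rewrite negb_and.
  case: (posnP (logn i n)) => [_ | ei]; first by rewrite orbT.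
  have [pri _] := logn_gt0_prime ei.
  rewrite dvdn_prime2 //; apply/orP; left.
  by move: ipi; rewrite mem_index_iota => /andP[_ ib]; rewrite gtn_eqF.
change (sigmaN (Mpart b * b ^ e) * (\prod_(0 <= i < b | q i) i.-1 * b.-1) <=
  Mpart b * b ^ e * (\prod_(0 <= i < b | q i) i * b)).
set D := \prod_(0 <= i < b | q i) i.-1.
set U := \prod_(0 <= i < b | q i) i.
have b0 : 0 < b ^ e by rewrite expn_gt0 prime_gt0.
have h1 := sigM (M_gt0 b) b0 cop.
have h2 := sig_pexp e pr.
apply: (@leq_trans (sigmaN (Mpart b) * sigmaN (b ^ e) * (D * b.-1))).
  by rewrite leq_mul2r h1 orbT.
rewrite mulnACA [Mpart b * b ^ e * _]mulnACA.
apply: leq_mul => //.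
by rewrite -expnSr ltnW.
Qed.
End PartBound.


Definition clpred (cl : nat -> nat) (c : nat) : nat_pred := [pred p | cl p == c].

Lemma classes_prod n J (cl : nat -> nat) : 0 < n -> (forall p, cl p <= J) ->
  n = \prod_(c < J.+1) n`_(clpred cl c).
Proof.
move=> n0 clJ.
rewrite -{1}(partnT n0) /partn.
rewrite (eq_bigr (fun p => \prod_(c < J.+1 | cl p == c) p ^ logn p n)); last first.
  move=> p _; rewrite (big_pred1 (inord (cl p) : 'I_J.+1)) //.
  by move=> c; rewrite /= -(inj_eq val_inj) /= inordK // ltnS.
by rewrite (exchange_big_dep predT) //=.
Qed.

Lemma classes_max n J (cl : nat -> nat) : 0 < n -> (forall p, cl p <= J) ->
  exists c, c <= J /\ n <= (n`_(clpred cl c)) ^ J.+1.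
Proof.
move=> n0 clJ.
have [c0 Hc0] := eq_bigmax (fun c : 'I_J.+1 => n`_(clpred cl c)) (ltac:(by rewrite card_ord)).
exists c0; split; first by rewrite -ltnS ltn_ord.
rewrite {1}(classes_prod n0 clJ) -Hc0.
apply: (@leq_trans (\prod_(c < J.+1) \max_(i < J.+1) n`_(clpred cl i))).
  apply: leq_prod => c _.
  by rewrite (bigD1 c) //= leq_maxl.
by rewrite prod_nat_const card_ord.
Qed.


Lemma prod_primes_dvd (s : seq nat) N : uniq s -> all prime s ->
  all (fun p => p %| N) s -> \prod_(p <- s) p %| N.
Proof.
elim: s => [|p s IH] /=; first by rewrite big_nil dvd1n.
move=> /andP[ps us] /andP[pp ap] /andP[pN aN].
rewrite big_cons Gauss_dvd ?pN ?IH //.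
rewrite prime_coprime // Euclid_dvd_prod // big_seq_cond.
rewrite big1_idem // => q /andP[qs _].
have pq : prime q by move/allP: ap; apply.
rewrite dvdn_prime2 //; apply/negbTE; apply: contra ps => /eqP ->.
exact: qs.
Qed.

Lemma prod_const_seq (s : seq nat) (P : pred nat) c :
  \prod_(p <- s | P p) c = c ^ count P s.
Proof.
elim: s => [|x s IH]; first by rewrite big_nil.
by rewrite big_cons /=; case: (P x); rewrite IH // expnS.
Qed.

Lemma prod_ge (s : seq nat) m : (forall p, p \in s -> m <= p) ->
  m ^ size s <= \prod_(p <- s) p.
Proof.
elim: s => [|x s IH] h; first by rewrite big_nil.
rewrite big_cons /= expnS leq_mul ?h ?mem_head // IH // => p ps.
by apply: h; rewrite inE ps orbT.
Qed.

Lemma binom_bound m : 'C(m.*2, m) <= 2 ^ m.*2.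
Proof.
have := expnDn 1 1 m.*2; rewrite add1n => ->.
rewrite (bigD1 (inord m : 'I_m.*2.+1)) //= inordK; last by rewrite ltnS -addnn leq_addl.
by rewrite !exp1n !muln1 leq_addr.
Qed.

Lemma not_dvd_fact p m : m < p -> ~~ (p %| m`!) \/ ~~ prime p.
Proof.
case pp: (prime p); last by right.
move=> mp; left; rewrite fact_prod Euclid_dvd_prod // big_seq_cond.
rewrite big1_idem // => i /andP[]; rewrite mem_index_iota => /andP[i1 im] _.
apply/negbTE; apply: contraTN isT => pi.
have := dvdn_leq i1 pi; lia.
Qed.

Lemma prime_dvd_binom m p : prime p -> m < p <= m.*2 -> p %| 'C(m.*2, m).
Proof.
move=> pp /andP[mp pm].
have hf : p %| (m.*2)`! by apply: dvdn_fact; rewrite pm (leq_trans _ mp).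
rewrite -(bin_fact (_ : m <= m.*2)) ?leq_double in hf; last by rewrite -addnn leq_addr.
rewrite Euclid_dvdM // in hf; case/orP: hf => // hf.
have e : m.*2 - m = m by rewrite -addnn addnK.
rewrite e Euclid_dvdM // orbb in hf.
by case: (not_dvd_fact mp) => /negP; rewrite ?pp.
Qed.

Lemma count_primes_interval k B :
  k * count (fun p => prime p && (2 ^ k < p <= 2 ^ k.+1)) (index_iota 0 B) <= 2 ^ k.+1.
Proof.
set m := 2 ^ k.
set s := filter (fun p => prime p && (m < p <= 2 ^ k.+1)) (index_iota 0 B).
have m2 : 2 ^ k.+1 = m.*2 by rewrite expnS mul2n.
have hdvd : \prod_(p <- s) p %| 'C(m.*2, m).
  apply: prod_primes_dvd.
  - by rewrite filter_uniq // iota_uniq.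
  - by apply/allP => p; rewrite mem_filter => /andP[/andP[]].
  - apply/allP => p; rewrite mem_filter => /andP[/andP[pp pI] _].
    by apply: prime_dvd_binom => //; rewrite -m2.
have hle : \prod_(p <- s) p <= 2 ^ m.*2.
  apply: leq_trans (binom_bound m); apply: dvdn_leq => //.
  by rewrite bin_gt0 -addnn leq_addr.
have hge : m ^ size s <= \prod_(p <- s) p.
  apply: prod_ge => p; rewrite mem_filter => /andP[/andP[_ /andP[/ltnW ->]]].
  done.
rewrite -size_filter -/s m2.
rewrite -(leq_exp2l _ _ (ltnSn 1)).
apply: leq_trans hle.
by rewrite expnM -/m.
Qed.

Lemma count_block k B : 0 < k ->
  k * count (fun p => prime p && (trunc_log 2 p == k)) (index_iota 0 B)
  <= 5 * (2 ^ k).-1.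
Proof.
move=> k0.
set a1 := pred1 (2 ^ k).
set a2 := (fun p => prime p && (2 ^ k < p <= 2 ^ k.+1)).
have sub : subpred (fun p => prime p && (trunc_log 2 p == k)) (predU a1 a2).
  move=> p /andP[pp /eqP tk].
  have := trunc_log_bounds (ltnSn 1) (prime_gt0 pp); rewrite tk => /andP[h1 h2].
  rewrite /= /a2 pp /=; rewrite eq_sym; case: eqP => //= ne.
  apply/andP; split; last exact: ltnW.
  by rewrite ltn_neqAle h1 andbT; apply/eqP.
have c1 := sub_count sub (index_iota 0 B).
have c2 := count_predUI a1 a2 (index_iota 0 B).
have c3 : count a1 (index_iota 0 B) <= 1.
  by rewrite (count_uniq_mem _ (iota_uniq _ _)); case: (_ \in _).
have c4 := count_primes_interval k B.
rewrite -/a2 in c4.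
have e1 : k + 5 <= 3 * 2 ^ k.
  elim: k k0 {sub c1 c2 c3 c4 a1 a2} => // k IH _.
  case: k IH => [|k] IH //.
  rewrite expnS; have := IH isT; lia.
have e2 : 1 <= 2 ^ k by rewrite expn_gt0.
rewrite expnS in c4.
apply: (@leq_trans (k * (count a1 (index_iota 0 B) + count a2 (index_iota 0 B)))).
  rewrite leq_mul2l; apply/orP; right; apply: (leq_trans c1); rewrite -c2; exact: leq_addr.
nia.
Qed.


Lemma modn_modulo m d : 0 < d -> Nat.modulo m d = m %% d.
Proof.
move=> d0; symmetry; apply: (Nat.mod_unique m d (m %/ d)).
  by apply/ltP; rewrite ltn_pmod.
by rewrite {1}(divn_eq m d) Nat.mul_comm -multE -plusE.
Qed.

Lemma sigma_seq m s k : 0 < s ->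
  fold_right Nat.add 0 (List.filter (fun d => Nat.eqb (Nat.modulo m d) 0) (List.seq s k))
  = \sum_(d <- iota s k | d %| m) d.
Proof.
elim: k s => [|k IH] s s0; first by rewrite big_nil.
rewrite /= big_cons modn_modulo // /dvdn.
by case: (m %% s) => [|r] /=; rewrite IH.
Qed.

Lemma sigma_div_sig m : 0 < m -> sigma_div m = sigmaN m.
Proof.
move=> m0; rewrite /sigma_div sigma_seq // /sigmaN -(big_mkord (fun d => d %| m) (fun d => d)).
rewrite /index_iota subn0 /= big_cons dvd0n.
by case: m m0.
Qed.

Import Order.TTheory GRing.Theory Num.Theory.
Open Scope ring_scope.


Lemma exp_le (x y : R) : x <= y -> exp x <= exp y.
Proof.
move/RleP => h; apply/RleP; case: (Rle_lt_or_eq_dec _ _ h) => [lt|->].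
  by apply: Rlt_le; apply: exp_increasing.
exact: Rle_refl.
Qed.

Lemma exp_ge0 (x : R) : 0 <= exp x.
Proof. by apply/RleP; apply: Rlt_le; apply: exp_pos. Qed.

Lemma prod_exp (s : seq nat) (P : pred nat) (x : nat -> R) :
  (forall p, 0 <= x p) ->
  \prod_(p <- s | P p) (1 + x p) <= exp (\sum_(p <- s | P p) x p).
Proof.
move=> x0; elim: s => [|a s IH]; first by rewrite !big_nil expR0.
rewrite !big_cons; case: (P a) => //.
rewrite -expRD; apply: ler_pM => //.
- by rewrite addr_ge0.
- by apply: prodr_ge0 => i _; rewrite addr_ge0.
- by have := exp_ineq1_le (x a) => /RleP.
Qed.

Lemma ratio_bound (s : seq nat) (P : pred nat) (C : R) :
  (forall p, P p -> (2 <= p)%N) ->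
  \sum_(p <- s | P p) ((p.-1)%:R)^-1 <= C ->
  (\prod_(p <- s | P p) p)%:R <= exp C * (\prod_(p <- s | P p) p.-1)%:R :> R.
Proof.
move=> h2 hs; rewrite !natr_prod.
rewrite (eq_bigr (fun p => (p.-1)%:R * (1 + ((p.-1)%:R)^-1))); last first.
  move=> p Pp; have := h2 _ Pp => p2.
  have q0 : (p.-1)%:R != 0 :> R by rewrite pnatr_eq0; case: p p2 {Pp} => [|[]].
  rewrite mulrDr mulr1 mulfV // natr1 prednK //; exact: leq_trans p2.
rewrite big_split /= mulrC; apply: ler_wpM2r.
  by apply: prodr_ge0 => i _; apply: ler0n.
apply: le_trans (prod_exp _ _ _) (exp_le hs) => p.
by rewrite invr_ge0 ler0n.
Qed.

Lemma sum_const_count (s : seq nat) (P : pred nat) (x : R) :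
  \sum_(i <- s | P i) x = x *+ count P s.
Proof.
elim: s => [|a s IH]; first by rewrite big_nil.
by rewrite big_cons /=; case: (P a); rewrite IH // add1n mulrS.
Qed.

Lemma inv_le (a b : nat) : (0 < a)%N -> (a <= b)%N -> (b%:R : R)^-1 <= (a%:R)^-1.
Proof.
move=> a0 ab; rewrite lef_pV2 ?ler_nat // ?posrE ?ltr0n //.
exact: leq_trans ab.
Qed.


Lemma sum_pred1_nat (s : seq nat) (t : nat) (x : R) : uniq s -> t \in s ->
  \sum_(j <- s | t == j) x = x.
Proof.
move=> us ts; rewrite sum_const_count.
have -> : count (fun j => t == j) s = count_mem t s.
  by apply: eq_count => j; rewrite eq_sym.
by rewrite count_uniq_mem // ts.
Qed.

Lemma inner_bound (j B : nat) (Q : pred nat) : (0 < j)%N ->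
  (forall p, Q p -> prime p) ->
  \sum_(p <- index_iota 0 B | Q p && (trunc_log 2 p == j)) ((p.-1)%:R : R)^-1
  <= 5%:R / (j%:R).
Proof.
move=> j0 hQ.
set N := count (fun p => prime p && (trunc_log 2 p == j)) (index_iota 0 B).
have hD : (0 < (2 ^ j).-1)%N.
  have : (2 ^ 1 <= 2 ^ j)%N by rewrite leq_exp2l.
  by rewrite expn1 => h; lia.
apply: (@le_trans _ _ (((2 ^ j).-1)%:R^-1 *+ N)).
  rewrite /N -(sum_const_count (index_iota 0 B) (fun p => prime p && (trunc_log 2 p == j))) big_mkcond [X in _ <= X]big_mkcond /=; apply: ler_sum => p _.
  case Qp: (Q p); case tp: (trunc_log 2 p == j) => //=; rewrite ?andbF //.
  - have pp := hQ _ Qp; rewrite pp /=.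
    apply: inv_le => //.
    have := trunc_log_bounds (ltnSn 1) (prime_gt0 pp); rewrite (eqP tp) => /andP[h1 _].
    by rewrite -!subn1 leq_sub2r.
  - case: (prime p) => //=; by rewrite invr_ge0 ler0n.
have hc := count_block B j0; rewrite -/N in hc.
rewrite -(mulr_natl (((2^j).-1)%:R^-1) N) ler_pdivlMr ?ltr0n // mulrAC ler_pdivrMr ?ltr0n //.
by rewrite -!natrM ler_nat mulnC.
Qed.

Lemma tl_facts c p : prime p -> trunc_log 2 (trunc_log 2 p) = c ->
  [/\ (0 < trunc_log 2 p)%N, (2 ^ c <= trunc_log 2 p)%N &
      (trunc_log 2 p < 2 ^ c.+1)%N].
Proof.
move=> pp tc.
have k0 : (0 < trunc_log 2 p)%N by rewrite trunc_log_gt0 /= prime_gt1.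
have := trunc_log_bounds (ltnSn 1) k0; rewrite tc => /andP[h1 h2].
by split.
Qed.

Lemma small_sum c B (Q : pred nat) :
  (forall p, Q p -> prime p && (trunc_log 2 (trunc_log 2 p) == c)) ->
  \sum_(p <- index_iota 0 B | Q p) ((p.-1)%:R : R)^-1 <= 10%:R.
Proof.
move=> hQ.
rewrite (eq_bigr (fun p => \sum_(j <- index_iota 0 (2 ^ c.+1) | trunc_log 2 p == j)
   ((p.-1)%:R : R)^-1)); last first.
  move=> p Qp; have /andP[pp /eqP tc] := hQ _ Qp.
  have [_ _ h3] := tl_facts pp tc.
  by rewrite sum_pred1_nat // ?iota_uniq // mem_index_iota.
rewrite (exchange_big_dep predT) //=.
apply: (@le_trans _ _ (\sum_(j <- index_iota 0 (2 ^ c.+1)) 5%:R / (2 ^ c)%:R)).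
  apply: ler_sum => j _.
  case: (leqP (2 ^ c) j) => hj.
    have j0 : (0 < j)%N by apply: leq_trans hj; rewrite expn_gt0.
    have hQ' : forall p, Q p -> prime p by move=> p /hQ /andP[].
    apply: le_trans (inner_bound B j0 hQ') _.
    apply: ler_wpM2l; first by rewrite ler0n.
    by apply: inv_le => //; rewrite expn_gt0.
  rewrite big1_seq; first by rewrite divr_ge0 ?ler0n.
  move=> p /andP[/andP[Qp /eqP tj] _].
  have /andP[pp /eqP tc] := hQ _ Qp.
  have [_ h2 _] := tl_facts pp tc.
  by move: hj; rewrite -tj ltnNge h2.
rewrite sum_const_count count_predT size_iota subn0 -(mulr_natr (5 / (2 ^ c)%:R)) expnS natrM.
rewrite mulrCA divfK; last by rewrite pnatr_eq0 expn_eq0.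
by rewrite -natrM.
Qed.

Lemma big_sum n J B (Q : pred nat) : (0 < n)%N -> (n < 2 ^ (2 ^ (2 ^ J)))%N ->
  (forall p, Q p -> [&& prime p, p %| n & 2 ^ (2 ^ J) <= p]%N) ->
  \sum_(p <- index_iota 0 B | Q p) ((p.-1)%:R : R)^-1 <= 1.
Proof.
move=> n0 nL hQ.
set L := (2 ^ (2 ^ J))%N.
have L2 : (2 <= L)%N.
  by rewrite /L -{1}(expn1 2) leq_exp2l // expn_gt0.
apply: (@le_trans _ _ (\sum_(p <- index_iota 0 B | Q p) ((L.-1)%:R : R)^-1)).
  apply: ler_sum => p /hQ /and3P[pp _ Lp].
  by apply: inv_le; rewrite -!subn1 ?leq_sub2r //; rewrite subn_gt0.
rewrite sum_const_count.
set s := filter Q (index_iota 0 B).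
have hs : count Q (index_iota 0 B) = size s by rewrite size_filter.
have hdvd : (\prod_(p <- s) p %| n)%N.
  apply: prod_primes_dvd.
  - by rewrite filter_uniq // iota_uniq.
  - by apply/allP => p; rewrite mem_filter => /andP[/hQ /and3P[]].
  - by apply/allP => p; rewrite mem_filter => /andP[/hQ /and3P[]].
have hge : (L ^ size s <= \prod_(p <- s) p)%N.
  by apply: prod_ge => p; rewrite mem_filter => /andP[/hQ /and3P[]].
have h2 : (2 ^ size s <= L ^ size s)%N.
  case: (size s) => [|t] //; by rewrite leq_exp2r.
have ht : (size s < L)%N.
  rewrite -(ltn_exp2l _ _ (ltnSn 1)).
  apply: leq_ltn_trans nL; apply: leq_trans h2 _; apply: leq_trans hge _.
  exact: dvdn_leq.
apply: (@le_trans _ _ (((L.-1)%:R : R)^-1 *+ L.-1)).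
  have L1 : (0 < L.-1)%N by rewrite -subn1 subn_gt0.
  by rewrite hs ler_pMn2l ?invr_gt0 ?ltr0n // -ltnS prednK // ltnW.
rewrite -(mulr_natr (((L.-1)%:R : R)^-1) L.-1) mulVf // pnatr_eq0 -lt0n -subn1 subn_gt0 //.
Qed.


Lemma core_nat (n J : nat) : (0 < n)%N -> (n < 2 ^ (2 ^ (2 ^ J)))%N ->
  exists m, [/\ (m %| n)%N, (n <= m ^ J.+1)%N &
     ((sigmaN m)%:R : R) <= exp 10%:R * m%:R].
Proof.
move=> n0 nL.
pose cl p := minn (trunc_log 2 (trunc_log 2 p)) J.
have clJ : forall p, (cl p <= J)%N by move=> p; rewrite geq_minr.
have [c [cJ hn]] := classes_max n0 clJ.
set pi := clpred cl c.
exists (n`_pi)%N; split => //; first exact: dvdn_part.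
have hM : Mpart n pi n.+1 = (n`_pi)%N by [].
have hpb := part_bound n pi n.+1; rewrite hM in hpb.
set D := \prod_(0 <= p < n.+1 | qq n pi p) p.-1 in hpb.
set U := \prod_(0 <= p < n.+1 | qq n pi p) p in hpb.
have hq : forall p, qq n pi p -> [/\ prime p, (p %| n)%N & cl p = c].
  move=> p /andP[pin lp]; have [pp pn] := logn_gt0_prime lp.
  by split => //; move: pin; rewrite /pi /clpred inE => /eqP.
have hsum : \sum_(p <- index_iota 0 n.+1 | qq n pi p) ((p.-1)%:R : R)^-1 <= 10%:R.
  case: (ltnP c J) => cJ'.
    apply: le_trans (@small_sum c n.+1 (qq n pi) _) _ => //. move=> p /hq [pp _ clp]; rewrite pp /=.
    move: clp; rewrite /cl /= => clp; apply/eqP; lia.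
  have cE : c = J by apply/eqP; rewrite eqn_leq cJ cJ'.
  apply: le_trans (@big_sum n J n.+1 (qq n pi) n0 nL _) _; last by rewrite ler1n.
  move=> p /hq [pp pn clp]; rewrite pp pn /=.
  have hJ : (J <= trunc_log 2 (trunc_log 2 p))%N.
    move: clp; rewrite /cl /= => clp; lia.
  have k0 : (0 < trunc_log 2 p)%N by rewrite trunc_log_gt0 /= prime_gt1.
  have := trunc_log_bounds (ltnSn 1) k0 => /andP[h1 _].
  have := trunc_log_bounds (ltnSn 1) (prime_gt0 pp) => /andP[h2 _].
  apply: leq_trans h2; rewrite leq_exp2l //; apply: leq_trans h1.
  by rewrite leq_exp2l.
have hU := ratio_bound (fun p hp => let: And3 pp _ _ := hq p hp in prime_gt1 pp) hsum.
rewrite -/U -/D in hU.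
have D0 : (0 < D)%N.
  rewrite /D big_mkcond; apply: prodn_gt0 => p; case: ifP => // /hq [pp _ _].
  by rewrite -subn1 subn_gt0 prime_gt1.
have D0' : (0 : R) < D%:R by rewrite ltr0n.
rewrite -(ler_pM2r D0').
apply: (@le_trans _ _ ((n`_pi)%N%:R * U%:R)).
  by rewrite -!natrM ler_nat.
rewrite -mulrA mulrCA; apply: ler_wpM2l => //; exact: ler0n.
Qed.

Close Scope ring_scope.


Lemma core_R n J : (0 < n)%N -> (n < 2 ^ (2 ^ (2 ^ J)))%N ->
  exists m, (m %| n)%N /\ (n <= m ^ J.+1)%N /\
    Rle (INR (sigma_div m)) (Rmult (exp (10%:R)%R) (INR m)).
Proof.
move=> n0 nL; have [m [mn nm hs]] := core_nat n0 nL.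
have m0 : (0 < m)%N by apply: dvdn_gt0 mn.
exists m; split => //; split => //.
by rewrite sigma_div_sig // !INRE; apply/RleP.
Qed.


Open Scope R_scope.

Lemma INR_exp2 k : INR (2 ^ k)%N = 2 ^ k.
Proof.
elim: k => [|k IH]; first by rewrite expn0 /=; lra.
rewrite expnS -[(2 * 2 ^ k)%N]/(Nat.mul 2 (2 ^ k)%N) mult_INR IH /=; lra.
Qed.

Lemma INR_expn m k : INR (m ^ k)%N = INR m ^ k.
Proof.
elim: k => [|k IH]; first by rewrite expn0 /=.
by rewrite expnS -[(m * m ^ k)%N]/(Nat.mul m (m ^ k)%N) mult_INR IH /=.
Qed.

Lemma plog_ge1 x : 1 <= plog x.
Proof. rewrite /plog; apply: Rmax_r. Qed.

Lemma plog_ge_ln x : ln x <= plog x.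
Proof. rewrite /plog; apply: Rmax_l. Qed.

Lemma exp_le' a b : a <= b -> exp a <= exp b.
Proof.
move=> h; case: (Rle_lt_or_eq_dec _ _ h) => [lt|->]; last by lra.
by apply: Rlt_le; apply: exp_increasing.
Qed.

Lemma ln2_bounds : / 2 < ln 2 /\ ln 2 < 1.
Proof.
split; first exact: ln_lt_2.
have h := exp_ineq1 1 R1_neq_R0.
have e : ln (exp 1) = 1 := ln_exp 1.
rewrite -e; apply: ln_increasing; lra.
Qed.

Lemma pow2_ge k : exp (INR k / 2) <= 2 ^ k.
Proof.
have h2 : 0 < 2 by lra.
rewrite -(Rpower_pow k 2 h2) /Rpower.
apply: exp_le'; have [h1 _] := ln2_bounds; have := pos_INR k; nra.
Qed.

Lemma choose_J (y : R) : 0 < y -> exists J : nat, y < INR J /\ INR J <= y + 1.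
Proof.
move=> y0; have [h1 h2] := archimed y.
have z0 : Z.lt 0 (up y) by apply: lt_0_IZR; lra.
exists (Z.to_nat (up y)).
rewrite INR_IZR_INZ Z2Nat.id; last by lia.
split; lra.
Qed.

Theorem mainTheorem7 :
  exists c K : R, 0 < c /\ 0 < K /\
    forall n : nat, Peano.lt 0 n ->
      exists m : nat, Nat.divide m n /\
        Rpower (INR n) (c / plog (plog (plog (INR n)))) <= INR m /\
        INR (sigma_div m) <= K * INR m.
Proof.
exists (/ 8), (exp (10%:R)%R); split; first lra; split; first exact: exp_pos.
move=> n Hn.
set L1 := plog (INR n); set L2 := plog L1; set L3 := plog L2.
have L1g : 1 <= L1 := plog_ge1 (INR n).
have L2g : 1 <= L2 := plog_ge1 L1.
have L3g : 1 <= L3 := plog_ge1 L2.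
have l1 : ln (INR n) <= L1 := plog_ge_ln (INR n).
have l2 : ln L1 <= L2 := plog_ge_ln L1.
have l3 : ln L2 <= L3 := plog_ge_ln L2.
have [J [J1 J2]] := choose_J (ltac:(lra) : 0 < 6 * L3).
have nR : 0 < INR n by apply: lt_0_INR.
have hN : (n < 2 ^ (2 ^ (2 ^ J)))%N.
  apply/ssrnat.ltP; apply: INR_lt; rewrite INR_exp2.
  set N1 := (2 ^ J)%N; set N2 := (2 ^ N1)%N.
  have [ln2a ln2b] := ln2_bounds.
  have eL3 : 2 <= exp L3.
    have := exp_ineq1_le L3; lra.
  have h4a : exp (3 * L3) = exp L3 * exp L3 * exp L3.
    by rewrite -!exp_plus; congr exp; lra.
  have h4b : exp (3 * L3) <= exp (INR J / 2) by apply: exp_le'; lra.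
  have h4c : exp (INR J / 2) <= 2 ^ J := pow2_ge J.
  have h4 : 2 + 2 * L2 < INR N1.
    rewrite /N1 INR_exp2.
    have : L2 <= exp L3.
      have := exp_ln L2 (ltac:(lra)); have := exp_le' l3; lra.
    nra.
  have h3a : L1 <= exp L2 by have := exp_ln L1 (ltac:(lra)); have := exp_le' l2; lra.
  have h3b : exp (INR N1 / 2) <= 2 ^ N1 := pow2_ge N1.
  have h3c : 2 * exp L2 < exp (INR N1 / 2).
    have e2 : 2 = exp (ln 2) by rewrite exp_ln; lra.
    rewrite {1}e2 -exp_plus; apply: exp_increasing; lra.
  have h3 : 2 * L1 < INR N2 by rewrite /N2 INR_exp2; lra.
  have h2a : exp (INR N2 / 2) <= 2 ^ N2 := pow2_ge N2.
  have h1 : INR n <= exp L1.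
    by have := exp_ln (INR n) nR; have := exp_le' l1; lra.
  have : exp L1 < exp (INR N2 / 2) by apply: exp_increasing; lra.
  lra.
have n0 : (0 < n)%N by apply/ssrnat.ltP.
have [m [mn [nm hs]]] := core_R n0 hN.
exists m; split; last split => //.
  by case/dvdnP: mn => k ->; exists k.
have m0 : (0 < m)%N by apply: dvdn_gt0 mn.
have mR : 0 < INR m by apply: lt_0_INR; apply/ssrnat.ltP.
have n1 : 1 <= INR n by apply: (le_INR 1); apply/ssrnat.leP.
have nmR : INR n <= INR m ^ J.+1.
  rewrite -INR_expn; apply: le_INR; apply/ssrnat.leP; exact: nm.
have JR : INR J.+1 = INR J + 1 by rewrite S_INR.
apply: (@Rle_trans _ (Rpower (INR n) (/ INR J.+1))).
  apply: Rle_Rpower => //.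
  rewrite JR /Rdiv -Rinv_mult.
  apply: Rinv_le_contravar; have := pos_INR J; lra.
apply: (@Rle_trans _ (Rpower (INR m ^ J.+1) (/ INR J.+1))).
  apply: Rle_Rpower_l; last by split.
  by apply: Rlt_le; apply: Rinv_0_lt_compat; rewrite JR; have := pos_INR J; lra.
rewrite -(Rpower_pow J.+1 (INR m) mR) Rpower_mult Rinv_r; last first.
  by rewrite JR; have := pos_INR J; lra.
by rewrite Rpower_1 //; lra.
Qed.
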